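(* Let $d\ge 3$ be a prime, $\omega=e^{2\pi i/d}$, and $-\frac{1}{d^2-1}\le p\le 1$. Let $\rho_{AB}=p\,|\Psi^+\rangle\langle\Psi^+|+(1-p)\frac{\mathbb{I}}{d^2}$ on $\mathbb{C}^d\otimes\mathbb{C}^d$, where $|\Psi^+\rangle=\frac{1}{\sqrt d}\sum_{i=0}^{d-1}|ii\rangle$. Consider the $d+1$ mutually unbiased bases consisting of the computational basis $\mathcal{Z}=\{|0\rangle,\dots,|d-1\rangle\}$, the Fourier basis $\mathcal{X}=\{\mathcal{F}|0\rangle,\dots,\mathcal{F}|d-1\rangle\}$, and the bases $M_k=\{D^k\mathcal{F}|l\rangle\}_{l=0}^{d-1}$ for $k=1,\dots,d-1$. Then $I(M_k^A:M_k^B)=0$ for every $k=1,\dots,d-1$, and $$I(Z^A:Z^B)=I(X^A:X^B)=2\log(d)+d\Big(\tfrac{p}{d}+\tfrac{1-p}{d^2}\Big)\log\Big(\tfrac{p}{d}+\tfrac{1-p}{d^2}\Big)+(d^2-d)\,\tfrac{1-p}{d^2}\log\Big(\tfrac{1-p}{d^2}\Big).$$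
   Context: Logarithms are base 2, $0\log 0=0$. $\mathcal{F}=\frac{1}{\sqrt d}\sum_{x,y=0}^{d-1}\omega^{xy}|x\rangle\langle y|$ and $D=\mathrm{diag}(\omega^{j^2})_{j=0}^{d-1}$. For a basis $\{|m_j\rangle\}$, $M^A,M^B$ are the outcomes when both parties measure their subsystem in that basis, with joint distribution $p(j,k)=\langle m_j\otimes m_k|\rho_{AB}|m_j\otimes m_k\rangle$, and $I(M^A:M^B)=H(M^A)+H(M^B)-H(M^AM^B)$ is the classical (Shannon) mutual information. *)

(* Defs.v *)
From HB Require Import structures.
From mathcomp Require Import all_boot all_order all_algebra.
From mathcomp Require Import complex.
From mathcomp Require Import reals exp trigo.
Set Implicit Arguments. Unset Strict Implicit. Unset Printing Implicit Defensive.
Import Order.TTheory GRing.Theory Num.Theory.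
Local Open Scope ring_scope.
Local Open Scope complex_scope.

Section QDefs.
Variable R : realType.
Variable d : nat.
Local Notation C := (R[i]).

Definition log2 (x : R) : R := ln x / ln 2.
Definition xlogx (x : R) : R := if x == 0 then 0 else x * log2 x.

Definition entropy (T : finType) (P : T -> R) : R := - \sum_(t : T) xlogx (P t).

Definition omega : C := Complex (cos (2 * pi / d%:R)) (sin (2 * pi / d%:R)).

Definition sqrtdC : C := (Num.sqrt (d%:R : R))%:C.

Definition Fourier (x y : 'I_d) : C := sqrtdC^-1 * omega ^+ (x * y).

(* a basis is a family of d vectors in C^d : b j x = <x|b_j> *)
Definition basis_t := 'I_d -> 'I_d -> C.

Definition Zbasis : basis_t := fun j x => (x == j)%:R.
Definition Xbasis : basis_t := fun l x => Fourier x l.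
(* D^k F |l>, D = diag(omega^(j^2)) *)
Definition Mbasis (k : nat) : basis_t := fun l x => omega ^+ (k * (x * x)) * Fourier x l.

Definition psi_plus (xy : 'I_d * 'I_d) : C := sqrtdC^-1 * (xy.1 == xy.2)%:R.

Definition rhoAB (p : R) (xy xy' : 'I_d * 'I_d) : C :=
  p%:C * (psi_plus xy * (psi_plus xy')^*)
  + ((1 - p) / (d%:R ^+ 2))%:C * (xy == xy')%:R.

Definition joint_prob (rho : 'I_d * 'I_d -> 'I_d * 'I_d -> C) (b : basis_t)
    (jk : 'I_d * 'I_d) : R :=
  complex.Re (\sum_(xy : 'I_d * 'I_d) \sum_(xy' : 'I_d * 'I_d)
     (b jk.1 xy.1 * b jk.2 xy.2)^* * rho xy xy' * (b jk.1 xy'.1 * b jk.2 xy'.2)).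

Definition mutual_info (rho : 'I_d * 'I_d -> 'I_d * 'I_d -> C) (b : basis_t) : R :=
  let P := joint_prob rho b in
  entropy (fun j : 'I_d => \sum_(k : 'I_d) P (j, k))
  + entropy (fun k : 'I_d => \sum_(j : 'I_d) P (j, k))
  - entropy P.

End QDefs.

(* Main.v *)
Require Import Defs.
From HB Require Import structures.
From mathcomp Require Import all_boot all_order all_algebra.
From mathcomp Require Import complex.
From mathcomp Require Import reals exp trigo.
From mathcomp Require Import ring lra.
Import Order.TTheory GRing.Theory Num.Theory.
Local Open Scope complex_scope.
Local Open Scope ring_scope.

Section Om.
Variable R : realType.
Variable d : nat.
Local Notation C := (R[i]).
Local Notation w := (@omega R d).
Let th : R := 2 * pi / d%:R.

Lemma omegaX m : w ^+ m = Complex (cos (m%:R * th)) (sin (m%:R * th)).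
Proof.
have mulC : forall a b c e : R, (a +i* b) * (c +i* e) = (a*c - b*e) +i* (a*e + b*c) by [].
elim: m => [|m IH]; first by rewrite expr0 mul0r cos0 sin0.
rewrite exprS IH /omega -/th mulC.
rewrite -[m.+1]addn1 natrD mulrDl mul1r cosD sinD.
congr Complex; ring.
Qed.

Hypothesis d_gt2 : (2 < d)%N.
Lemma d_gt0 : (0 < d)%N. Proof. by apply: leq_trans d_gt2. Qed.
Lemma dR_neq0 : (d%:R : R) != 0. Proof. by rewrite pnatr_eq0 -lt0n d_gt0. Qed.

Lemma omega_d : w ^+ d = 1.
Proof.
rewrite omegaX /th mulrCA divff ?dR_neq0 // mulr1 mulrC mulr_natr.
by rewrite cos2pi sin2pi.
Qed.

Lemma omega_mod m : w ^+ m = w ^+ (m %% d).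
Proof. by rewrite {1}(divn_eq m d) exprD mulnC exprM omega_d expr1n mul1r. Qed.

Lemma omega_neq1 : w != 1.
Proof.
apply/negP => /eqP H.
move: (congr1 (@complex.Im R) H); rewrite /omega /= => Hs.
have K := (@sin_gt0_pi R (2 * pi / d%:R)).
rewrite Hs ltxx in K; suff: false by []; apply: K; apply/andP; split.
  by rewrite divr_gt0 ?mulr_gt0 ?pi_gt0 // ltr0n d_gt0.
rewrite ltr_pdivrMr ?ltr0n ?d_gt0 // mulrC ltr_pM2l ?pi_gt0 //.
by rewrite ltr_nat.
Qed.

Lemma omega_conjK : w^* * w = 1.
Proof.
have mulC : forall a b : R, (a -i* b) * (a +i* b) = (a*a - (-b)*b) +i* (a*b + (-b)*a) by [].
rewrite /omega /= mulC mulNr opprK mulNr -!expr2 cos2Dsin2 (mulrC (sin _)) subrr //.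
Qed.

Lemma sum_omega : \sum_(i < d) w ^+ i = 0.
Proof.
have := subrX1 w d; rewrite omega_d subrr => /esym/eqP.
by rewrite mulf_eq0 subr_eq0 (negbTE omega_neq1) => /eqP.
Qed.
End Om.

Section Zd.
Variable R : realType.
Variable n : nat.
Local Notation d := n.+2.
Local Notation C := (R[i]).
Local Notation w := (@omega R d).
Hypothesis d_gt2 : (2 < d)%N.
Hypothesis d_prime : prime d.

Definition E (a : 'I_d) : C := w ^+ a.

Lemma E_nat m : E (m%:R) = w ^+ m.
Proof. by rewrite /E Zp_nat /= [RHS](@omega_mod R d d_gt2). Qed.

Lemma E_add a b : E (a + b) = E a * E b.
Proof. by rewrite /E /= -(@omega_mod R d d_gt2) exprD. Qed.

Lemma E0 : E 0 = 1.
Proof. by rewrite /E expr0. Qed.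

Lemma E_mulnat (a b : 'I_d) : w ^+ (a * b)%N = E (a * b).
Proof. by rewrite /E /= -(@omega_mod R d d_gt2). Qed.

Lemma E_conj a : (E a)^* = E (- a).
Proof.
have h1 : (E a)^* * E a = 1 by rewrite /E rmorphXn /= -exprMn omega_conjK expr1n.
have h2 : E (- a) * E a = 1 by rewrite -E_add addNr E0.
by rewrite -[LHS]mulr1 -h2 mulrA mulrC mulrA (mulrC (E a)) h1 mul1r.
Qed.

Lemma Zd_dom (a b : 'I_d) : a * b = 0 -> a = 0 \/ b = 0.
Proof.
move=> /(congr1 val) /= /eqP; rewrite -/(dvdn _ _) Euclid_dvdM //.
case/orP => /dvdn_leq H.
  left; apply/val_inj => /=; case: (posnP a) => // /H; rewrite leqNgt ltn_ord.
  by [].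
right; apply/val_inj => /=; case: (posnP b) => // /H; rewrite leqNgt ltn_ord.
by [].
Qed.

Lemma sum_E (a : 'I_d) : \sum_(x : 'I_d) E (a * x) = if a == 0 then d%:R else 0.
Proof.
case: eqP => [->|/eqP a0].
  under eq_bigr do rewrite mul0r E0.
  by rewrite sumr_const card_ord.
have inj : injective (fun x : 'I_d => a * x).
  move=> x y /eqP; rewrite -subr_eq0 -mulrBr => /eqP /Zd_dom [/eqP|/eqP];
   by rewrite ?(negbTE a0) // subr_eq0 => /eqP.
transitivity (\sum_(x : 'I_d) E x); first by rewrite [RHS](reindex_inj inj).
exact: (@sum_omega R d d_gt2).
Qed.
End Zd.

Lemma conjM' (R : realType) (x y : R[i]) : (x * y)^* = x^* * y^*.
Proof. exact: rmorphM. Qed.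
Lemma conj_sum (R : realType) (I : finType) (F : I -> R[i]) :
  (\sum_i F i)^* = \sum_i (F i)^*.
Proof. exact: rmorph_sum. Qed.

Lemma conjR (R : realType) (x : R) : (x%:C)^* = x%:C.
Proof. by apply: conj_Creal; rewrite complex_real. Qed.

Lemma conj_key (R : realType) (a : R) (G : R[i]) :
  (a%:C * G) * (a%:C * G)^* = (a * a)%:C * (G * G^*).
Proof. by rewrite conjM' conjR rmorphM /=; ring. Qed.

Section JP.
Variable R : realType.
Variable d : nat.
Local Notation C := (R[i]).

Lemma sum_pair (G : 'I_d * 'I_d -> C) :
  \sum_(xy : 'I_d * 'I_d) G xy = \sum_(x : 'I_d) \sum_(y : 'I_d) G (x, y).
Proof. by rewrite pair_bigA; apply: eq_bigr => -[x y]. Qed.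

Lemma sum_delta (x : 'I_d) (F : 'I_d -> C) :
  \sum_(y : 'I_d) F y * (x == y)%:R = F x.
Proof.
rewrite (bigD1 x) //= eqxx mulr1 big1 ?addr0 // => y /negbTE.
by rewrite eq_sym => ->; rewrite mulr0.
Qed.

Lemma sum_delta2 (x : 'I_d * 'I_d) (F : 'I_d * 'I_d -> C) :
  \sum_(y : 'I_d * 'I_d) F y * (x == y)%:R = F x.
Proof.
rewrite (bigD1 x) //= eqxx mulr1 big1 ?addr0 // => y /negbTE.
by rewrite eq_sym => ->; rewrite mulr0.
Qed.

Lemma E1gen (Bx By px py pc r e : C) :
  Bx^* * (pc * (px * py^* ) + r * e) * By
  = pc * ((Bx^* * px) * (By^* * py)^* ) + r * (Bx^* * By) * e.
Proof. rewrite rmorphM /= conjCK; ring. Qed.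

Lemma joint_probE (p : R) (b : basis_t R d) j k :
  joint_prob (rhoAB p) b (j, k) =
  complex.Re (p%:C * ((sqrtdC R d)^-1 * (sqrtdC R d)^-1^* ) *
     ((\sum_x (b j x * b k x)^* ) * (\sum_x (b j x * b k x)^* )^* )
   + ((1 - p) / (d%:R ^+ 2))%:C *
     ((\sum_x (b j x)^* * b j x) * (\sum_x (b k x)^* * b k x))).
Proof.
rewrite /joint_prob /rhoAB /=; congr complex.Re.
under eq_bigr => xy _ do under eq_bigr => xy' _ do rewrite E1gen.
under eq_bigr => xy _ do rewrite big_split /= sum_delta2.
rewrite big_split /=.
have HX : \sum_xy (b j xy.1 * b k xy.2)^* * psi_plus R xy
   = (sqrtdC R d)^-1 * \sum_x (b j x * b k x)^*.
  rewrite sum_pair mulr_sumr; apply: eq_bigr => x _.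
  rewrite /psi_plus /=.
  under eq_bigr => y _ do rewrite mulrA.
  rewrite (sum_delta x (fun y => (b j x * b k y)^* * (sqrtdC R d)^-1)) /=.
  by rewrite mulrC.
congr (_ + _).
  have HXc : \sum_xy ((b j xy.1 * b k xy.2)^* * psi_plus R xy)^*
     = ((sqrtdC R d)^-1 * \sum_x (b j x * b k x)^* )^*.
    by rewrite -HX rmorph_sum.
  under eq_bigr => xy _ do rewrite -mulr_sumr -mulr_sumr HXc.
  rewrite -mulr_sumr -mulr_suml HX rmorphM.
  ring.
rewrite sum_pair big_distrlr mulr_sumr; apply: eq_bigr => x _.
rewrite mulr_sumr; apply: eq_bigr => y _.
by rewrite /= rmorphM; ring.
Qed.

Lemma s_conj : (sqrtdC R d)^-1^* = (sqrtdC R d)^-1.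
Proof. by apply: conj_Creal; rewrite /sqrtdC -fmorphV complex_real. Qed.

Lemma s_sq : (sqrtdC R d)^-1 * (sqrtdC R d)^-1 = ((d%:R : R)^-1)%:C.
Proof.
rewrite /sqrtdC -fmorphV -rmorphM -expr2 exprVn sqr_sqrtr //.
Qed.

Lemma ReC (x : R) : complex.Re (x%:C) = x. Proof. by []. Qed.

Lemma conj_b (b : bool) : ((b%:R : R[i]))^* = b%:R.
Proof. by case: b; rewrite /= ?rmorph0 ?rmorph1. Qed.

Lemma Z_prob p j k : (0 < d)%N ->
  joint_prob (rhoAB p) (@Zbasis R d) (j, k)
  = p / d%:R * (k == j)%:R + (1 - p) / d%:R ^+ 2.
Proof.
move=> d0.
have dn0 : (d%:R : R) != 0 by rewrite pnatr_eq0 -lt0n.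
have hT : \sum_x (@Zbasis R d j x * @Zbasis R d k x)^* = (((k == j)%:R : R))%:C.
  rewrite /Zbasis; under eq_bigr => x _ do rewrite conjM' !conj_b (eq_sym x k).
  by rewrite (sum_delta k (fun x => (x == j)%:R)) (rmorph_nat (real_complex R)).
have hN : forall j, \sum_x (@Zbasis R d j x)^* * @Zbasis R d j x = 1.
  move=> i; rewrite /Zbasis; under eq_bigr => x _ do rewrite conj_b {2}(eq_sym x i).
  by rewrite (sum_delta i (fun x => (x == i)%:R)) eqxx.
rewrite joint_probE hT !hN s_conj s_sq conjR -!rmorphM mulr1 -rmorphD ReC.
by case: (k == j); rewrite /= ?mulr1 ?mulr0.
Qed.
End JP.

Section Phase.
Variable R : realType.
Variable n : nat.
Local Notation d := n.+2.
Local Notation C := (R[i]).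
Hypothesis d_gt2 : (2 < d)%N.
Hypothesis d_prime : prime d.
Local Notation s := ((sqrtdC R d)^-1).
Local Notation E := (@E R n).

Lemma phase_norm a : (s * E a)^* * (s * E a) = s * s.
Proof.
rewrite conjM' s_conj (@E_conj R n d_gt2) mulrACA -(@E_add R n d_gt2) addNr.
by rewrite (E0 R n) mulr1.
Qed.

Lemma N_phase (b : basis_t R d) f j : (forall l x, b l x = s * E (f l x)) ->
  \sum_x (b j x)^* * b j x = 1.
Proof.
move=> hb; under eq_bigr do rewrite hb phase_norm.
rewrite sumr_const card_ord s_sq -rmorphMn /= -mulr_natr mulVf //.
by rewrite pnatr_eq0.
Qed.

Lemma T_phase (b : basis_t R d) f j k : (forall l x, b l x = s * E (f l x)) ->
  \sum_x (b j x * b k x)^* = s * s * \sum_x E (- (f j x + f k x)).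
Proof.
move=> hb; rewrite mulr_sumr; apply: eq_bigr => x _.
rewrite !hb !conjM' !s_conj !(@E_conj R n d_gt2) opprD (@E_add R n d_gt2).
ring.
Qed.

Lemma prob_phase (b : basis_t R d) f (p t : R) j k :
  (forall l x, b l x = s * E (f l x)) ->
  (\sum_x E (- (f j x + f k x))) * (\sum_x E (- (f j x + f k x)))^*
    = (t * d%:R ^+ 2)%:C ->
  joint_prob (rhoAB p) b (j, k) = p / d%:R * t + (1 - p) / d%:R ^+ 2.
Proof.
move=> hb hG.
rewrite joint_probE (T_phase _ _ _ _ hb) !(N_phase _ _ _ hb) s_conj s_sq.
rewrite conj_key hG mulr1 -!rmorphM -rmorphD ReC.
have dn0 : (d%:R : R) != 0 by rewrite pnatr_eq0.
by field; move: dn0; rewrite -addn2 natrD addrC.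
Qed.

Lemma X_phase l x : @Xbasis R d l x = s * E (x * l).
Proof. by rewrite /Xbasis /Fourier (@E_mulnat R n d_gt2). Qed.

Lemma X_prob p j k :
  joint_prob (rhoAB p) (@Xbasis R d) (j, k)
  = p / d%:R * (k == - j)%:R + (1 - p) / d%:R ^+ 2.
Proof.
apply: (prob_phase _ (fun l x => x * l) _ _ _ _ X_phase).
have -> : \sum_x E (- (x * j + x * k)) = if - (j + k) == 0 then d%:R else 0.
  rewrite -(@sum_E R n d_gt2 d_prime); apply: eq_bigr => x _; congr E; ring.
have -> : (- (j + k) == 0) = (k == - j) by rewrite oppr_eq0 addrC addr_eq0.
case: (k == - j) => /=; last by rewrite !mul0r rmorph0.
by rewrite rmorph_nat mul1r rmorphXn /= rmorph_nat expr2.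
Qed.

Lemma two_neq0 : (2 : 'I_d) != 0.
Proof.
apply/eqP => /(congr1 val) /=; rewrite !modn_small //; apply: leq_trans d_gt2 => //.
Qed.

Lemma gauss (c b0 : 'I_d) : c != 0 ->
  (\sum_x E (- (c * (x * x) + x * b0))) * (\sum_x E (- (c * (x * x) + x * b0)))^*
  = d%:R.
Proof.
move=> c0.
have key : forall x t, E (- (c * (x * x) + x * b0)) * (E (- (c * ((x + t) * (x + t)) + (x + t) * b0)))^*
   = E ((2 * c * t) * x) * E (c * (t * t) + t * b0).
  by move=> x t; rewrite (@E_conj R n d_gt2) -!(@E_add R n d_gt2); congr E; ring.
rewrite conj_sum big_distrlr /=.
transitivity (\sum_(x : 'I_d) \sum_(t : 'I_d) E ((2 * c * t) * x) * E (c * (t * t) + t * b0)).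
  apply: eq_bigr => x _; rewrite (reindex_inj (addrI x)) /=.
  by apply: eq_bigr => t _; rewrite key.
rewrite exchange_big /=.
under eq_bigr => t _ do rewrite -mulr_suml (@sum_E R n d_gt2 d_prime).
rewrite (bigD1 0) //= mulr0 eqxx mul0r mulr0 mul0r addr0 (@E0 R n) mulr1 big1 ?addr0 //.
move=> t t0; case: eqP => [|]; last by rewrite mul0r.
case/(@Zd_dom n d_prime) => [/(@Zd_dom n d_prime) [|]|/eqP]; last by rewrite (negbTE t0).
  by move/eqP; rewrite (negbTE two_neq0).
by move/eqP; rewrite (negbTE c0).
Qed.

Lemma M_phase k l x : @Mbasis R d k l x = s * E (k%:R * (x * x) + x * l).
Proof.
rewrite /Mbasis /Fourier (@E_mulnat R n d_gt2).
rewrite -(@E_nat R n d_gt2) natrM natrM !natr_Zp (@E_add R n d_gt2).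
by rewrite mulrCA.
Qed.

Lemma M_prob p k j l : (1 <= k <= d - 1)%N ->
  joint_prob (rhoAB p) (@Mbasis R d k) (j, l) = (d%:R ^+ 2)^-1.
Proof.
move=> /andP [k1 k2].
have dn0 : (d%:R : R) != 0 by rewrite pnatr_eq0.
rewrite (prob_phase _ (fun l x => k%:R * (x * x) + x * l) p (d%:R^-1) _ _ (M_phase k)).
  by field; move: dn0; rewrite -addn2 natrD addrC.
have kn0 : (k%:R : 'I_d) != 0.
  have hk : val (k%:R : 'I_d) = (k %% d)%N := @val_Zp_nat d isT k.
  apply/eqP => /(congr1 val); rewrite hk /= modn_small.
    by move=> k0; move: k1; rewrite k0.
  by apply: leq_ltn_trans k2 _; rewrite subn1 /=.
have c0 : (2 * k%:R : 'I_d) != 0.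
  apply/eqP => /(@Zd_dom n d_prime) [/eqP|/eqP].
    by rewrite (negbTE two_neq0).
  by rewrite (negbTE kn0).
have -> : \sum_x E (- (k%:R * (x * x) + x * j + (k%:R * (x * x) + x * l)))
   = \sum_x E (- ((2 * k%:R) * (x * x) + x * (j + l))).
  by apply: eq_bigr => x _; congr E; ring.
rewrite (gauss _ _ c0) -[LHS](rmorph_nat (real_complex R)); congr (_%:C).
by field; move: dn0; rewrite -addn2 natrD addrC.
Qed.
End Phase.


Lemma sumD' (R : realType) (I : finType) (F G : I -> R) :
  \sum_i (F i + G i) = \sum_i F i + \sum_i G i.
Proof. exact: big_split. Qed.

Lemma e3gen (R : realType) (d : nat) (P : 'I_d * 'I_d -> R) (rel : 'I_d -> 'I_d -> bool) (a r : R) :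
  (forall j k, P (j, k) = a * (rel j k)%:R + r) ->
  (forall j, \sum_k ((rel j k)%:R : R) = 1) ->
  \sum_(t : 'I_d * 'I_d) xlogx (P t)
    = d%:R * (xlogx (a + r) - xlogx r) + d%:R * d%:R * xlogx r.
Proof.
move=> hP h1.
have xl : forall bb : bool, xlogx (a * bb%:R + r) = bb%:R * (xlogx (a + r) - xlogx r) + xlogx r.
  by case; rewrite /= ?mulr1 ?mul1r ?subrK ?mulr0 ?add0r ?mul0r ?add0r.
transitivity (\sum_(j : 'I_d) \sum_(k : 'I_d) xlogx (a * (rel j k)%:R + r)).
  by rewrite pair_bigA /=; apply: eq_bigr => -[j k] _; rewrite hP.
under eq_bigr => j _ do under eq_bigr => k _ do rewrite (xl (rel j k)).
move: (xlogx (a + r)) (xlogx r) => u v.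
under eq_bigr => j _ do rewrite sumD' -mulr_suml h1 mul1r sumr_const card_ord.
rewrite sumD' !sumr_const card_ord.
rewrite -[(u - v) *+ d]mulr_natl -[(v *+ d) *+ d]mulr_natl -[v *+ d]mulr_natl.
by rewrite mulrA.
Qed.

Lemma xlogxE' (R : realType) (x : R) : xlogx x = x * log2 x.
Proof. by rewrite /xlogx; case: eqP => [->|]; rewrite ?mul0r. Qed.

Lemma mi_rel2 (R : realType) (d : nat) (d0 : (0 < d)%N)
   (rho : 'I_d * 'I_d -> 'I_d * 'I_d -> R[i]) (b : basis_t R d)
   (rel : 'I_d -> 'I_d -> bool) (a r : R) :
  (forall j k, joint_prob rho b (j, k) = a * (rel j k)%:R + r) ->
  (forall j, \sum_k ((rel j k)%:R : R) = 1) ->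
  (forall k, \sum_j ((rel j k)%:R : R) = 1) ->
  a + d%:R * r = (d%:R)^-1 ->
  mutual_info rho b = 2 * log2 (d%:R) + d%:R * xlogx (a + r) + (d%:R ^+ 2 - d%:R) * xlogx r.
Proof.
move=> hP h1 h2 hm.
have dn0 : (d%:R : R) != 0 by rewrite pnatr_eq0 -lt0n.
have m1 : forall j, \sum_k joint_prob rho b (j, k) = d%:R^-1.
  move=> j; under eq_bigr do rewrite hP.
  by rewrite big_split /= -mulr_sumr h1 sumr_const card_ord mulr1 -hm mulr_natl.
have m2 : forall k, \sum_j joint_prob rho b (j, k) = d%:R^-1.
  move=> k; under eq_bigr do rewrite hP.
  by rewrite big_split /= -mulr_sumr h2 sumr_const card_ord mulr1 -hm mulr_natl.
have e1 : \sum_j xlogx (\sum_k joint_prob rho b (j, k)) = d%:R * xlogx (d%:R^-1).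
  by under eq_bigr do rewrite m1; rewrite sumr_const card_ord mulr_natl.
have e2 : \sum_k xlogx (\sum_j joint_prob rho b (j, k)) = d%:R * xlogx (d%:R^-1).
  by under eq_bigr do rewrite m2; rewrite sumr_const card_ord mulr_natl.
have lv : log2 ((d%:R : R)^-1) = - log2 d%:R.
  by rewrite /log2 lnV ?mulNr // posrE ltr0n.
rewrite /mutual_info /entropy e1 e2 (@e3gen R d (joint_prob rho b) rel a r hP h1) (@xlogxE' R (d%:R^-1)) lv.
move: (xlogx (a + r)) (xlogx r) (log2 (d%:R : R)) => u v l.
by field.
Qed.

Lemma sum_eq1 (R : realType) (d : nat) (j : 'I_d) : \sum_(k : 'I_d) ((k == j)%:R : R) = 1.
Proof.
rewrite (bigD1 j) //= eqxx big1 ?addr0 // => k /negbTE ->; by [].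
Qed.

Local Close Scope complex_scope.

Theorem proposition5 (R : realType) (d : nat) (p : R) :
  prime d -> (3 <= d)%N ->
  - 1 / ((d%:R : R) ^+ 2 - 1) <= p -> p <= 1 ->
  let rho := @rhoAB R d p in
  let q := p / d%:R + (1 - p) / d%:R ^+ 2 in
  let r := (1 - p) / d%:R ^+ 2 in
  let val := 2 * log2 (d%:R) + d%:R * q * log2 q
             + ((d%:R ^+ 2) - d%:R) * r * log2 r in
  (forall k : nat, (1 <= k <= d - 1)%N -> mutual_info rho (@Mbasis R d k) = 0)
  /\ mutual_info rho (@Zbasis R d) = val
  /\ mutual_info rho (@Xbasis R d) = val.
Proof.
move=> dp d3 _ _; cbv zeta.
case: d dp d3 => [|[|n]] // dp d3.
have d_gt2 : (2 < n.+2)%N := d3.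
have d0 : (0 < n.+2)%N by [].
have dn0 : ((n.+2)%:R : R) != 0 by rewrite pnatr_eq0.
split; [|split].
- move=> k hk.
  rewrite (@mi_rel2 R n.+2 d0 (rhoAB p) (@Mbasis R n.+2 k) (fun j k => k == j) 0
     ((n.+2%:R ^+ 2)^-1)).
  + rewrite add0r !xlogxE' /log2 lnV ?posrE ?exprn_gt0 ?ltr0n // lnXn ?ltr0n //.
    move: (ln (n.+2%:R : R)) ((ln (2 : R))^-1) => l l2.
    by field; move: dn0; rewrite -addn2 natrD addrC.
  + by move=> j l; rewrite (@M_prob R n d_gt2 dp p k j l hk) mul0r add0r.
  + by move=> j; apply: sum_eq1.
  + by move=> l; under eq_bigr do rewrite eq_sym; apply: sum_eq1.
  + by rewrite add0r; field; move: dn0; rewrite -addn2 natrD addrC.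
- rewrite (@mi_rel2 R n.+2 d0 (rhoAB p) (@Zbasis R n.+2) (fun j k => k == j)
     (p / n.+2%:R) ((1 - p) / n.+2%:R ^+ 2)).
  + by rewrite !xlogxE' !mulrA.
  + by move=> j l; rewrite (@Z_prob R n.+2 p j l d0).
  + by move=> j; apply: sum_eq1.
  + by move=> l; under eq_bigr do rewrite eq_sym; apply: sum_eq1.
  + by field; move: dn0; rewrite -addn2 natrD addrC.
- rewrite (@mi_rel2 R n.+2 d0 (rhoAB p) (@Xbasis R n.+2) (fun j k => k == - j)
     (p / n.+2%:R) ((1 - p) / n.+2%:R ^+ 2)).
  + by rewrite !xlogxE' !mulrA.
  + by move=> j l; rewrite (@X_prob R n d_gt2 dp p j l).
  + by move=> j; apply: sum_eq1.
  + move=> l; under eq_bigr => j _ do rewrite eq_sym eqr_oppLR.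
    by apply: sum_eq1.
  + by field; move: dn0; rewrite -addn2 natrD addrC.
Qed.
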